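(* In the setting below, suppose the tight disturbance bound assumption and the persistent excitation assumption hold. Then for all $t\in\mathbb{N}_{\ge0}$, all $\epsilon>0$, and every $\theta\in\mathbb{R}^p$ with $\|\theta^\ast-\theta\|\ge\epsilon$, there exists $j\in\{t+1,\dots,t+N_u\}$ such that $$\Pr\{\theta\notin\Delta_j\}\ \ge\ p_w\bigl(\epsilon\sqrt{\beta/N_u}\bigr).$$
   Context: Setting: $\theta^\ast\in\mathbb{R}^p$ is a fixed (unknown) parameter vector. $\mathcal{W}=\{w\in\mathbb{R}^{n_x}:\Pi_w w\le\pi_w\}$ is a compact convex polytope with $\pi_w>0$. The disturbances $w_0,w_1,\dots$ are independent random vectors with $w_t\in\mathcal{W}$ for all $t$. $D_0,D_1,\dots\in\mathbb{R}^{n_x\times p}$ is a given (non-random) sequence of regressor matrices. For $t\ge1$ the (random) unfalsified parameter set is $\Delta_t=\{\theta\in\mathbb{R}^p: D_{t-1}(\theta^\ast-\theta)+w_{t-1}\in\mathcal{W}\}$. $\|\cdot\|$ is the Euclidean norm (induced 2-norm for matrices); $\partial\mathcal{W}$ is the boundary of $\mathcal{W}$. Tight disturbance bound assumption: there is a function $p_w:(0,\infty)\to(0,1]$ such that for all $w^0\in\partial\mathcal{W}$, all $\epsilon>0$ and all $t\ge0$, $\Pr\{\|w_t-w^0\|<\epsilon\}\ge p_w(\epsilon)$. Persistent excitation assumption: there exist $\tau>0$, $\beta>0$ and an integer $N_u\ge\lceil p/n_x\rceil$ such that for every $t\ge0$, $\|D_t\|\le\tau$ and $\sum_{j=t}^{t+N_u-1}D_j^\top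 D_j\succeq\beta I$. *)

(* Defs.v *)
From HB Require Import structures.
From mathcomp Require Import all_boot all_order all_algebra.
From mathcomp Require Import all_classical all_reals all_analysis.
Set Implicit Arguments. Unset Strict Implicit. Unset Printing Implicit Defensive.
Import Order.TTheory GRing.Theory Num.Theory numFieldTopology.Exports numFieldNormedType.Exports.
Local Open Scope classical_set_scope.
Local Open Scope ring_scope.

Definition vnorm (R : realType) (n : nat) (v : 'cV[R]_n) : R :=
  Num.sqrt (\sum_(i < n) v i 0 ^+ 2).

Definition opnorm_le (R : realType) (m n : nat) (M : 'M[R]_(m, n)) (c : R) : Prop :=
  forall x : 'cV[R]_n, vnorm (M *m x) <= c * vnorm x.

Definition psd (R : realType) (n : nat) (A : 'M[R]_n) : Prop :=
  forall x : 'cV[R]_n, 0 <= (x^T *m A *m x) 0 0.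

Definition polytope (R : realType) (m n : nat) (Pi : 'M[R]_(m, n)) (pi : 'cV[R]_m)
  : set 'cV[R]_n := [set v | forall i, (Pi *m v) i 0 <= pi i 0].

Definition boundary (R : realType) (n : nat) (A : set 'cV[R]_n) : set 'cV[R]_n :=
  closure A `\` interior A.

Definition borel_vec (R : realType) (n : nat) : set (set 'cV[R]_n) :=
  <<s [set: 'cV[R]_n], open >>.

Definition rand_vec (R : realType) (d : measure_display) (T : measurableType d)
  (n : nat) (X : T -> 'cV[R]_n) : Prop :=
  forall A, borel_vec A -> measurable (X @^-1` A).

Definition mutually_independent (R : realType) (d : measure_display)
  (T : measurableType d) (P : probability T R) (n : nat)
  (X : nat -> T -> 'cV[R]_n) : Prop :=
  forall (s : seq nat) (A : nat -> set 'cV[R]_n), uniq s ->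
    (forall i, borel_vec (A i)) ->
    P (\bigcap_(i in [set` s]) (X i @^-1` A i)) =
    (\prod_(i <- s) P (X i @^-1` A i))%E.

(* Unfalsified parameter set Delta_j (j >= 1) at outcome x. *)
Definition Delta (R : realType) (T : Type) (m nx p : nat)
  (Pi : 'M[R]_(m, nx)) (pi : 'cV[R]_m) (D : nat -> 'M[R]_(nx, p))
  (w : nat -> T -> 'cV[R]_nx) (thetas : 'cV[R]_p) (j : nat) (x : T)
  : set 'cV[R]_p :=
  [set theta | polytope Pi pi (D j.-1 *m (thetas - theta) + w j.-1 x)].

(* Main.v *)
Require Import Defs.
From HB Require Import structures.
From mathcomp Require Import all_boot all_order all_algebra.
From mathcomp Require Import all_classical all_reals all_analysis.
From mathcomp Require Import ring lra.
Set Implicit Arguments. Unset Strict Implicit. Unset Printing Implicit Defensive.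
Import Order.TTheory GRing.Theory Num.Theory numFieldTopology.Exports numFieldNormedType.Exports.
Local Open Scope classical_set_scope.
Local Open Scope ring_scope.
Lemma cont_sum (R : realType) (U : topologicalType) (I : Type) (s : seq I) (F : I -> U -> R) :
  (forall i, continuous (F i)) -> continuous (fun u => \sum_(i <- s) F i u).
Proof.
move=> Fc; elim: s => [|a s IH].
  under eq_fun do rewrite big_nil. exact: cst_continuous.
under eq_fun do rewrite big_cons.
move=> u; exact: (continuousD (Fc a u) (IH u)).
Qed.

Lemma cont_lin (R : realType) n (b : 'cV[R]_n) (a : 'I_n -> R) :
  continuous (fun y : 'cV[R]_n => \sum_i a i * (b i 0 + y i 0)).
Proof.
apply: cont_sum => i y.
have h : {for y, continuous (fun y : 'cV[R]_n => b i 0 + y i 0)}.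
  apply: (@continuousD _ _ _ (fun=> b i 0) (fun y : 'cV[R]_n => y i 0)).
  exact: cst_continuous. exact: coord_continuous.
exact: (continuousM (@cst_continuous _ _ (a i) y) h).
Qed.

Lemma cont_sq (R : realType) n (b : 'cV[R]_n) :
  continuous (fun y : 'cV[R]_n => \sum_i (y i 0 - b i 0) ^+ 2).
Proof.
apply: cont_sum => i y.
have h : {for y, continuous (fun y : 'cV[R]_n => y i 0 - b i 0)}.
  apply: (@continuousB _ _ _ (fun y : 'cV[R]_n => y i 0) (fun=> b i 0)).
  exact: coord_continuous. exact: cst_continuous.
exact: (continuousM h h).
Qed.
Definition dotv (R : realType) n (a b : 'cV[R]_n) : R := \sum_i a i 0 * b i 0.

Lemma dotv_ge0 (R : realType) n (a : 'cV[R]_n) : 0 <= dotv a a.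
Proof. by apply: sumr_ge0 => i _; rewrite -expr2 sqr_ge0. Qed.

Lemma vnorm_sq (R : realType) n (a : 'cV[R]_n) : vnorm a ^+ 2 = dotv a a.
Proof.
rewrite /vnorm sqr_sqrtr; last by apply: sumr_ge0 => i _; rewrite sqr_ge0.
by apply: eq_bigr => i _; rewrite expr2.
Qed.

Lemma vnorm_ge0 (R : realType) n (a : 'cV[R]_n) : 0 <= vnorm a.
Proof. exact: sqrtr_ge0. Qed.

Lemma trmx_dot (R : realType) n (a b : 'cV[R]_n) : (a^T *m b) 0 0 = dotv a b.
Proof. by rewrite mxE; apply: eq_bigr => i _; rewrite mxE. Qed.

Lemma dotvD (R : realType) n (v a b : 'cV[R]_n) : dotv v (a + b) = dotv v a + dotv v b.
Proof. by rewrite /dotv -big_split; apply: eq_bigr => i _; rewrite mxE mulrDr. Qed.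

Lemma dot_key (R : realType) n (v u : 'cV[R]_n) :
  2 * dotv v (v + u) = dotv v v + dotv (v + u) (v + u) - dotv u u.
Proof.
rewrite /dotv mulr_sumr -big_split -sumrB; apply: eq_bigr => i _; rewrite !mxE /=; ring.
Qed.

Lemma quad_form (R : realType) p nx (D : nat -> 'M[R]_(nx, p)) (beta : R) t N (x : 'cV[R]_p) :
  (x^T *m (\sum_(t <= j < t + N) (D j)^T *m D j - beta%:M) *m x) 0 0 =
  \sum_(t <= j < t + N) dotv (D j *m x) (D j *m x) - beta * dotv x x.
Proof.
rewrite mulmxBr mulmxBl mulmx_sumr mulmx_suml mxE summxE.
rewrite [X in _ + X]mxE mul_mx_scalar -scalemxAl mxE trmx_dot; congr (_ - _).
apply: eq_bigr => j _; rewrite -trmx_dot trmx_mul !mulmxA //.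
Qed.
Lemma exists_j (R : realType) p nx (D : nat -> 'M[R]_(nx, p)) (beta e : R) t Nu (x : 'cV[R]_p) :
  psd (\sum_(t <= j < t + Nu) (D j)^T *m D j - beta%:M) -> 0 < beta -> 0 < e ->
  e <= vnorm x ->
  (0 < Nu)%N /\ exists j, (t <= j < t + Nu)%N /\
     beta * e ^+ 2 / Nu%:R <= dotv (D j *m x) (D j *m x).
Proof.
move=> hpsd b0 e0 ex.
have hq := hpsd x; rewrite quad_form in hq.
have he2 : e ^+ 2 <= dotv x x.
  rewrite -vnorm_sq; have := vnorm_ge0 x; nra.
have hS : beta * e ^+ 2 <= \sum_(t <= j < t + Nu) dotv (D j *m x) (D j *m x).
  have : beta * e ^+ 2 <= beta * dotv x x by rewrite ler_pM2l.
  lra.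
have be0 : 0 < beta * e ^+ 2 by rewrite mulr_gt0 // exprn_gt0.
clear hq hpsd; case: Nu hS => [|Nu] hS.
  by move: hS; rewrite addn0 big_geq // => h; lra.
split => //.
apply: contrapT => H.
have H' : forall j, (t <= j < t + Nu.+1)%N ->
    dotv (D j *m x) (D j *m x) < beta * e ^+ 2 / Nu.+1%:R.
  move=> j hj; rewrite ltNge; apply/negP => hle; apply: H; by exists j.
have tlt : (t < t + Nu.+1)%N by rewrite addnS ltnS leq_addr.
have := ltr_sum_nat tlt H'; rewrite sumr_const_nat addKn -(mulr_natr (beta * e ^+ 2 / Nu.+1%:R)) divfK ?pnatr_eq0 //.
lra.
Qed.
Lemma dotvZ (R : realType) n (v a : 'cV[R]_n) s : dotv v (s *: a) = s * dotv v a.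
Proof. by rewrite /dotv mulr_sumr; apply: eq_bigr => i _; rewrite mxE; ring. Qed.

Lemma support_point (R : realType) m n (Pi : 'M[R]_(m, n)) (pi : 'cV[R]_m) (v : 'cV[R]_n) :
  (forall i, 0 < pi i 0) -> compact (polytope Pi pi) -> 0 < dotv v v ->
  exists w0, boundary (polytope Pi pi) w0 /\
    forall y, polytope Pi pi y -> dotv v y <= dotv v w0.
Proof.
move=> pi0 Wc vv0.
have W0 : polytope Pi pi !=set0.
  by exists 0 => i; rewrite mulmx0 mxE; exact: ltW.
have fc := @cont_lin R n 0 (fun i => v i 0).
have fE (y : 'cV[R]_n) : \sum_i v i 0 * ((0 : 'cV[R]_n) i 0 + y i 0) = dotv v y.
  by apply: eq_bigr => i _; rewrite mxE add0r.
have [c cW cmax] := compact_EVT_max W0 Wc (@continuous_subspaceT _ _ (polytope Pi pi) _ fc).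
have cmax' y : polytope Pi pi y -> dotv v y <= dotv v c.
  by move=> Wy; rewrite -!fE; apply: cmax; rewrite inE.
exists c; split => //; split.
  by apply: subset_closure; rewrite inE in cW.
move=> /nbhs_ballP [r r0 hr].
have {}r0 : 0 < r := r0.
set s := r / (2 * (`|v| + 1)).
have nv0 : 0 <= `|v| := normr_ge0 v.
have s0 : 0 < s by rewrite divr_gt0 // mulr_gt0 //; lra.
have : ball c r (c + s *: v).
  rewrite -ball_normE /= opprD addrA subrr add0r normrN normrZ gtr0_norm //.
  rewrite /s mulrAC ltr_pdivrMr; last by rewrite mulr_gt0 //; lra.
  nra.
move=> /hr /cmax'; rewrite dotvD dotvZ => h.
have : 0 < s * dotv v v by rewrite mulr_gt0.
lra.
Qed.
Lemma borel_open (R : realType) n (A : set 'cV[R]_n) : open A -> borel_vec A.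
Proof. by move=> oA; apply: sub_gen_smallest. Qed.

Lemma ball_open (R : realType) n (w0 : 'cV[R]_n) (r : R) : 0 < r ->
  open [set y | vnorm (y - w0) < r].
Proof.
move=> r0.
have -> : [set y | vnorm (y - w0) < r] =
   (fun y : 'cV[R]_n => \sum_i (y i 0 - w0 i 0) ^+ 2) @^-1` [set x | x < r ^+ 2].
  have E (y : 'cV[R]_n) : \sum_i (y - w0) i 0 ^+ 2 = \sum_i (y i 0 - w0 i 0) ^+ 2.
    by apply: eq_bigr => i _; rewrite !mxE.
  rewrite predeqE => y /=; rewrite /vnorm E {1}(_ : r = Num.sqrt (r ^+ 2)).
    by rewrite ltr_sqrt ?exprn_gt0.
  by rewrite sqrtr_sqr gtr0_norm.
apply: open_comp; last exact: open_lt.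
move=> y _; exact: cont_sq.
Qed.

Lemma notpoly_open (R : realType) m n (Pi : 'M[R]_(m, n)) (pi : 'cV[R]_m) (a : 'cV[R]_n) :
  open [set y | ~ polytope Pi pi (a + y)].
Proof.
rewrite -[X in open X]/(~` [set y | polytope Pi pi (a + y)]) openC.
have -> : [set y | polytope Pi pi (a + y)] = \bigcap_(i in setT)
    ((fun y : 'cV[R]_n => \sum_j Pi i j * (a j 0 + y j 0)) @^-1` [set x | x <= pi i 0]).
  have E (y : 'cV[R]_n) i : (Pi *m (a + y)) i 0 = \sum_j Pi i j * (a j 0 + y j 0).
    by rewrite mxE; apply: eq_bigr => j _; rewrite mxE.
  apply/seteqP; split => y /=.
  - by move=> h i _ /=; rewrite -E.
  - by move=> h i; rewrite E; exact: (h i I).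
apply: closed_bigI => i _.
apply: (proj1 (continuous_closedP _)); [exact: cont_lin | exact: closed_le].
Qed.
Theorem proposition2 (R : realType) (d : measure_display) (T : measurableType d)
  (P : probability T R) (nx p m : nat)
  (thetas : 'cV[R]_p) (Pi : 'M[R]_(m, nx)) (pi : 'cV[R]_m)
  (w : nat -> T -> 'cV[R]_nx) (D : nat -> 'M[R]_(nx, p))
  (p_w : R -> R) (tau beta : R) (Nu : nat) :
  (* W is a compact convex polytope with pi_w > 0 *)
  (forall i, 0 < pi i 0) ->
  compact (polytope Pi pi) ->
  (* independent random disturbances with values in W *)
  (forall t, rand_vec (w t)) ->
  mutually_independent P w ->
  (forall t x, polytope Pi pi (w t x)) ->
  (* tight disturbance bound assumption *)
  (forall e, 0 < e -> 0 < p_w e <= 1) ->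
  (forall w0, boundary (polytope Pi pi) w0 -> forall e, 0 < e -> forall t : nat,
     ((p_w e)%:E <= P [set x | (vnorm (w t x - w0) < e)%R])%E) ->
  (* persistent excitation assumption *)
  0 < tau -> 0 < beta -> ((p + nx.-1) %/ nx <= Nu)%N ->
  (forall t, opnorm_le (D t) tau) ->
  (forall t, psd (\sum_(t <= j < t + Nu) (D j)^T *m D j - beta%:M)) ->
  (* conclusion *)
  forall (t : nat) (e : R) (theta : 'cV[R]_p), 0 < e -> e <= vnorm (thetas - theta) ->
  exists j : nat, (t + 1 <= j <= t + Nu)%N /\
    ((p_w (e * Num.sqrt (beta / Nu%:R)))%:E <=
       P [set x | ~ Delta Pi pi D w thetas j x theta])%E.
Proof.
move=> hpi Wc hrv hind hWw hpw htight tau0 beta0 hNu hD hpsd t e theta e0 he.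
have [Nu0 [j [hj hv]]] := exists_j (hpsd t) beta0 e0 he.
set v := D j *m (thetas - theta) in hv *.
set e' := e * Num.sqrt (beta / Nu%:R).
have Nr0 : 0 < (Nu%:R : R) by rewrite ltr0n.
have e'2 : e' ^+ 2 = beta * e ^+ 2 / Nu%:R.
  rewrite /e' exprMn sqr_sqrtr ?divr_ge0 ?ler0n ?(ltW beta0) //.
  by rewrite mulrA [e ^+ 2 * _]mulrC.
have e'0 : 0 < e' by rewrite mulr_gt0 // sqrtr_gt0 divr_gt0.
have vv0 : 0 < dotv v v.
  by apply: lt_le_trans hv; rewrite -e'2 exprn_gt0.
have [w0 [bw0 w0max]] := support_point hpi Wc vv0.
exists j.+1; split; first by rewrite addn1 ltnS.
apply: le_trans (htight w0 bw0 e' e'0 j) _.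
apply: le_measure; rewrite ?inE.
- by move: (hrv j) => /(_ _ (borel_open (@ball_open R nx w0 e' e'0))).
- by move: (hrv j) => /(_ _ (borel_open (@notpoly_open R m nx Pi pi v))).
move=> x /= hx hpol.
have := w0max _ hpol.
set u := w j x - w0.
have -> : w j x = w0 + u by rewrite /u addrC subrK.
rewrite addrCA dotvD => h.
have hk := dot_key v u.
have := dotv_ge0 (v + u).
have hu : dotv u u < e' ^+ 2.
  rewrite -vnorm_sq; have := vnorm_ge0 u; move: hx; rewrite -/u; nra.
lra.
Qed.
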